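(* The hook subgroup $H_{\alpha_{12}}=X_{\alpha_3}X_{\alpha_5}X_{\alpha_6}X_{\alpha_7}X_{\alpha_8}X_{\alpha_9}X_{\alpha_{10}}X_{\alpha_{11}}X_{\alpha_{12}}$ is a normal subgroup of $U$ with $U/H_{\alpha_{12}}\cong(\mathbb{F}_q)^3$, and for each $s\in\mathbb{F}_q^\times$ the restriction $\mu_{\alpha_{12},s}|_{H_{\alpha_{12}}}$ is irreducible; the $q-1$ characters $\mu_{\alpha_{12},s}|_{H_{\alpha_{12}}}$, $s\in\mathbb{F}_q^\times$, are exactly the nonlinear irreducible characters of $H_{\alpha_{12}}$ (each of degree $q^4$). In particular every nonlinear irreducible character of $H_{\alpha_{12}}$ extends to $U$.
   Context: $q$ is a power of a prime $p$. $\Phi$ is a root system of type $D_4$ with simple roots $\alpha_1,\alpha_2,\alpha_3,\alpha_4$ ($\alpha_3$ central node), positive roots $\alpha_5=\alpha_1+\alpha_3$, $\alpha_6=\alpha_2+\alpha_3$, $\alpha_7=\alpha_3+\alpha_4$, $\alpha_8=\alpha_1+\alpha_2+\alpha_3$, $\alpha_9=\alpha_1+\alpha_3+\alpha_4$, $\alpha_{10}=\alpha_2+\alpha_3+\alpha_4$, $\alpha_{11}=\alpha_1+\alpha_2+\alpha_3+\alpha_4$, $\alpha_{12}=\alpha_1+\alpha_2+2\alpha_3+\alpha_4$. $U=U(q)$ is the Sylow $p$-subgroup of the Chevalley group $D_4(q)$ generated by $x_i(t)$ ($i=1,\dots,12$, $t\in\mathbb{F}_q$), with $x_i(t)x_i(u)=x_i(t+u)$,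 each element uniquely $x_1(d_1)\cdots x_{12}(d_{12})$, and commutators ($[a,b]=a^{-1}b^{-1}ab$): $[x_1(t),x_3(u)]=x_5(tu)$, $[x_1(t),x_6(u)]=x_8(-tu)$, $[x_1(t),x_7(u)]=x_9(tu)$, $[x_1(t),x_{10}(u)]=x_{11}(-tu)$, $[x_2(t),x_3(u)]=x_6(tu)$, $[x_2(t),x_5(u)]=x_8(-tu)$, $[x_2(t),x_7(u)]=x_{10}(tu)$, $[x_2(t),x_9(u)]=x_{11}(-tu)$, $[x_3(t),x_4(u)]=x_7(tu)$, $[x_3(t),x_{11}(u)]=x_{12}(-tu)$, $[x_4(t),x_5(u)]=x_9(-tu)$, $[x_4(t),x_6(u)]=x_{10}(-tu)$, $[x_4(t),x_8(u)]=x_{11}(-tu)$, $[x_5(t),x_{10}(u)]=x_{12}(-tu)$, $[x_6(t),x_9(u)]=x_{12}(-tu)$, $[x_7(t),x_8(u)]=x_{12}(tu)$, others trivial. $X_{\alpha_i}=\{x_i(t)\}$. Fix a nontrivial linear character $\phi$ of $(\mathbb{F}_q,+)$. Let $V=\prod_{i\in\{1,2,4,8,9,10,11,12\}}X_{\alpha_i}$ (a subgroup of $U$). For $s\in\mathbb{F}_q^\times$ let $\lambda_{\alpha_{12},s}$ be a linear character of $V$ with $\lambda_{\alpha_{12},s}(x_{12}(d))=\phi(sd)$ (such exists), and $\mu_{\alpha_{12},s}=\lambda_{\alpha_{12},s}^U$, the induced character. *)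

(* Defs.v *)
From HB Require Import structures.
From mathcomp Require Import all_boot all_order all_algebra all_fingroup all_solvable all_field all_character.
Set Implicit Arguments. Unset Strict Implicit. Unset Printing Implicit Defensive.
Import GRing.Theory Num.Theory.

Local Open Scope group_scope.

(* Commutator table of the positive root subgroups of D_4, for 1 <= i < j <= 12:
   d4comm i j = Some (k, neg) means [x_i(t), x_j(u)] = x_k(tu) (neg = false)
   or x_k(-tu) (neg = true); None means the commutator is trivial. *)
Definition d4comm (i j : nat) : option (nat * bool) :=
  match i, j with
  | 1, 3 => Some (5, false)
  | 1, 6 => Some (8, true)
  | 1, 7 => Some (9, false)
  | 1, 10 => Some (11, true)
  | 2, 3 => Some (6, false)
  | 2, 5 => Some (8, true)
  | 2, 7 => Some (10, false)
  | 2, 9 => Some (11, true)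
  | 3, 4 => Some (7, false)
  | 3, 11 => Some (12, true)
  | 4, 5 => Some (9, true)
  | 4, 6 => Some (10, true)
  | 4, 8 => Some (11, true)
  | 5, 10 => Some (12, true)
  | 6, 9 => Some (12, true)
  | 7, 8 => Some (12, false)
  | _, _ => None
  end.

Section D4.
Variables (F : finFieldType) (gT : finGroupType) (x : nat -> F -> gT).

Definition Xroot (i : nat) : {set gT} := [set x i t | t : F].

Definition d4prod (d : {ffun 'I_12 -> F}) : gT := \prod_(i < 12) x i.+1 (d i).

Definition Ud4 : {set gT} := <<\bigcup_(i < 12) Xroot i.+1>>.

Definition D4_relations : Prop :=
  [/\ (forall i t u, (1 <= i <= 12)%N -> x i t * x i u = x i (t + u)%R),
      (forall i j t u, (1 <= i)%N -> (i < j)%N -> (j <= 12)%N ->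
         [~ x i t, x j u] =
           match d4comm i j with
           | Some (k, neg) => x k (if neg then - (t * u) else t * u)%R
           | None => 1
           end),
      injective d4prod &
      (forall g, g \in Ud4 -> exists d, g = d4prod d)].

Definition Xprod (s : seq nat) : {set gT} := \prod_(i <- s) Xroot i.

Definition Vd4 : {set gT} := Xprod [:: 1; 2; 4; 8; 9; 10; 11; 12]%N.

Definition Hhook : {set gT} := Xprod [:: 3; 5; 6; 7; 8; 9; 10; 11; 12]%N.

End D4.

Definition nontriv_add_char (F : finFieldType) (phi : F -> algC) : Prop :=
  (forall a b, phi (a + b) = phi a * phi b)%R /\ exists a, phi a != 1%R.

(* Main.v *)
Require Import Defs.
From HB Require Import structures.
From mathcomp Require Import all_boot all_order all_algebra all_fingroup all_solvable all_field all_character.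
Import GRing.Theory Num.Theory.
Set Implicit Arguments. Unset Strict Implicit. Unset Printing Implicit Defensive.

Section Infra.
Variables (F : finFieldType) (gT : finGroupType) (x : nat -> F -> gT).
Hypothesis Rel : D4_relations x.
Local Open Scope group_scope.

Definition cm i j (t u : F) : gT :=
  match d4comm i j with
  | Some (k, neg) => x k (if neg then - (t * u) else t * u)%R
  | None => 1
  end.

Lemma xadd i t u : (0 < i <= 12)%N -> x i t * x i u = x i (t + u)%R.
Proof. by case: Rel => h _ _ _ /andP[a b]; apply: h; rewrite a b. Qed.

Lemma x0 i : (0 < i <= 12)%N -> x i 0%R = 1.
Proof.
move=> hi; apply: (@mulgI _ (x i 0%R)); by rewrite mulg1 xadd // addr0.
Qed.

Lemma xinv i t : (0 < i <= 12)%N -> (x i t)^-1 = x i (- t)%R.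
Proof.
move=> hi; apply: (@mulgI _ (x i t)); by rewrite mulgV xadd // subrr x0.
Qed.

Lemma commx i j t u : (0 < i)%N -> (i < j)%N -> (j <= 12)%N ->
  [~ x i t, x j u] = cm i j t u.
Proof. by case: Rel => _ h _ _; apply: h. Qed.

Lemma Xroot_group i : (0 < i <= 12)%N -> group_set (Xroot x i).
Proof.
move=> hi; apply/group_setP; split.
  by apply/imsetP; exists 0%R => //; rewrite x0.
move=> a b /imsetP[t _ ->] /imsetP[u _ ->]; rewrite xadd //.
by apply/imsetP; exists (t + u)%R.
Qed.

Lemma mem_Xroot i t : x i t \in Xroot x i.
Proof. by apply/imsetP; exists t. Qed.

Lemma Xprod_cons i s : Xprod x (i :: s) = Xroot x i * Xprod x s.
Proof. by rewrite /Xprod big_cons. Qed.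

Lemma Xprod_nil : Xprod x [::] = 1.
Proof. by rewrite /Xprod big_nil. Qed.

Lemma mem_Xprod s g : uniq s -> g \in Xprod x s ->
  exists f : nat -> F, g = \prod_(i <- s) x i (f i).
Proof.
elim: s g => [|i s IH] g.
  by rewrite Xprod_nil => _ /set1P ->; exists (fun _ => 0%R); rewrite big_nil.
rewrite /= Xprod_cons => /andP[nis us] /mulsgP[y w /imsetP[t _ ->] /(IH _ us)[f ->] ->].
exists (fun n => if n == i then t else f n); rewrite big_cons eqxx; congr (_ * _).
apply: eq_big_seq => n ns; case: eqP => // eni; by rewrite -eni ns in nis.
Qed.

Lemma Xprod_mem s f : \prod_(i <- s) x i (f i) \in Xprod x s.
Proof.
elim: s => [|i s IH]; first by rewrite big_nil Xprod_nil set11.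
by rewrite big_cons Xprod_cons; apply: mem_mulg => //; apply: mem_Xroot.
Qed.

Lemma prod_d4 s f : [seq n <- iota 1 12 | n \in s] = s ->
  \prod_(i <- s) x i (f i) = d4prod x [ffun j : 'I_12 => if j.+1 \in s then f j.+1 else 0%R].
Proof.
move=> hs; rewrite /d4prod.
rewrite (eq_bigr (fun j : 'I_12 => if j.+1 \in s then x j.+1 (f j.+1) else 1)); last first.
  move=> j _; rewrite ffunE; case: ifP => // _; apply: x0; exact: ltn_ord.
rewrite -big_mkcond -(big_mkord (fun j => j.+1 \in s) (fun j => x j.+1 (f j.+1))).
rewrite -(big_add1 _ _ _ 13 (fun n => n \in s) (fun n => x n (f n))) /= -{1}hs big_filter //.
Qed.


Definition okseq (s : seq nat) : bool := [seq n <- iota 1 12 | n \in s] == s.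
Definition commOK i j (s : seq nat) : bool :=
  match d4comm i j with Some (k, _) => k \in s | None => true end.
Fixpoint chain_ok (s : seq nat) : bool :=
  match s with
  | [::] => true
  | i :: s' => [&& okseq s, (0 < i <= 12)%N, i \notin s',
                 all (fun j => (i < j <= 12)%N && commOK i j s') s' & chain_ok s']
  end.

Lemma chain_uniq s : chain_ok s -> uniq s.
Proof. by elim: s => //= i s IH /and5P[_ _ -> _ /IH]. Qed.

Lemma chain_range s : chain_ok s -> all (fun n => 0 < n <= 12)%N s.
Proof. by elim: s => //= i s IH /and5P[_ -> _ _ /IH]. Qed.

Lemma one_Xprod s : all (fun n => 0 < n <= 12)%N s -> 1 \in Xprod x s.
Proof.
move=> /allP hs; have := Xprod_mem s (fun _ => 0%R).
by rewrite big1_seq // => n /andP[_ ns]; apply: x0; apply: hs.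
Qed.

Lemma Xroot_sub s j u : all (fun n => 0 < n <= 12)%N s -> j \in s -> x j u \in Xprod x s.
Proof.
elim: s => //= i s IH /andP[hi hs]; rewrite inE Xprod_cons => /orP[/eqP ->|js].
  by rewrite -[x i u]mulg1; apply: mem_mulg; [apply: mem_Xroot | apply: one_Xprod].
rewrite -[x j u]mul1g; apply: mem_mulg; last exact: IH.
by rewrite -(x0 hi) mem_Xroot.
Qed.

Lemma conj_lt i j t u : (0 < i)%N -> (i < j)%N -> (j <= 12)%N ->
  x j u ^ x i t = x j u * (cm i j t u)^-1.
Proof. by move=> *; rewrite conjg_mulR -invgR commx. Qed.

Lemma conj_gt i j t u : (0 < j)%N -> (j < i)%N -> (i <= 12)%N ->
  x j u ^ x i t = x j u * cm j i u t.
Proof. by move=> *; rewrite conjg_mulR commx. Qed.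

Lemma cm_mem i j t u s : all (fun n => 0 < n <= 12)%N s -> commOK i j s ->
  cm i j t u \in Xprod x s.
Proof.
rewrite /commOK /cm => hs; case: (d4comm i j) => [[k neg]|] ks.
  exact: Xroot_sub.
exact: one_Xprod.
Qed.

Lemma chain s : chain_ok s ->
  group_set (Xprod x s) /\ #|Xprod x s| = (#|F| ^ size s)%N.
Proof.
elim: s => [|i s IH].
  by rewrite Xprod_nil cards1 groupP.
move=> /[dup] ch /and5P[ok hi nis hall /[dup] chs /IH[gB cB]].
have rs := chain_range chs; have us := chain_uniq chs.
pose XG := Group (Xroot_group hi); pose BG := Group gB.
have key : forall t (f : nat -> F), x i t = \prod_(n <- s) x n (f n) -> t = 0%R.
  move=> t f ef.
  have E1 : forall v, x i v = \prod_(n <- i :: s) x n ((fun n => if n == i then v else 0%R) n).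
    move=> v; rewrite big_cons eqxx big1_seq ?mulg1 // => n /andP[_ ns].
    by case: eqP => [en|_]; [rewrite -en ns in nis | apply: x0; apply: (allP rs)].
  have E2 : forall h : nat -> F, \prod_(n <- s) x n (h n) =
       \prod_(n <- i :: s) x n ((fun n => if n == i then 0%R else h n) n).
    move=> h; rewrite big_cons eqxx x0 // mul1g; apply: eq_big_seq => n ns.
    by case: eqP => // en; rewrite -en ns in nis.
  have hio : (i.-1 < 12)%N by case/andP: (hi) => h1 h2; rewrite prednK.
  have := Rel; case=> _ _ inj _.
  have T : forall v : nat -> F, ([ffun j : 'I_12 => if j.+1 \in i :: s then v j.+1 else 0%R] : {ffun 'I_12 -> F}) (Ordinal hio) = v i.
    by move=> v; rewrite ffunE /= prednK ?mem_head //; case/andP: (hi).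
  have {}ok : [seq n <- iota 1 12 | n \in i :: s] = i :: s by apply/eqP.
  have ht : t = 0%R.
    have := ef; rewrite E1 E2 !(prod_d4 _ ok) => /inj e.
    have := congr1 (fun d : {ffun 'I_12 -> F} => d (Ordinal hio)) e.
    by rewrite !ffunE /= prednK ?mem_head ?eqxx //; case/andP: (hi).
  by [].
have nXB : XG \subset 'N(BG).
  apply/subsetP => g /imsetP[t _ ->]; rewrite inE; apply/subsetP => y /imsetP[b bB ->].
  have [f ->] := mem_Xprod us bB.
  rewrite conjg_prod big_seq; apply: group_prod => n ns.
  have /andP[/andP[lt le] cok] := allP hall n ns.
  rewrite conj_lt //; last by case/andP: (hi).
  by apply: groupM; [apply: Xroot_sub | rewrite groupV; apply: cm_mem].
split.
  rewrite Xprod_cons; have := introT (@comm_group_setP _ XG BG) (normC nXB); exact.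
rewrite Xprod_cons (TI_cardMg (G := XG) (H := BG)); last first.
  apply/eqP; rewrite eqEsubset sub1G andbT; apply/subsetP => y /setIP[/imsetP[t _ ->] yB].
  have [f ef] := mem_Xprod us yB.
  rewrite inE -(x0 hi); apply/eqP; congr (x i _).
  exact: (key t f ef).
rewrite cB /= expnS; congr (_ * _)%N.
rewrite card_imset //.
move=> t u e; apply/eqP; rewrite -subr_eq0; apply/eqP.
have [f ef] := mem_Xprod us (one_Xprod rs).
apply: (key _ f); rewrite -ef -xadd // e xadd // subrr x0 //.
Qed.


Lemma x_U i t : (0 < i <= 12)%N -> x i t \in Ud4 x.
Proof.
move=> hi; apply: mem_gen; apply/bigcupP.
have hio : (i.-1 < 12)%N by case/andP: (hi) => h1 h2; rewrite prednK.
by exists (Ordinal hio) => //=; rewrite prednK ?mem_Xroot //; case/andP: hi.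
Qed.

Lemma Xprod_U s : all (fun n => 0 < n <= 12)%N s -> Xprod x s \subset Ud4 x.
Proof.
elim: s => [|i s IH] /=; first by rewrite Xprod_nil sub1G.
case/andP=> hi hs; rewrite Xprod_cons mul_subG ?IH //.
by apply/subsetP => y /imsetP[t _ ->]; apply: x_U.
Qed.

Lemma U_img : Ud4 x = d4prod x @: setT.
Proof.
apply/eqP; rewrite eqEsubset; apply/andP; split.
  apply/subsetP => g gU; case: Rel => _ _ _ /(_ g gU)[d ->].
  by apply: imset_f.
apply/subsetP => g /imsetP[d _ ->]; rewrite /d4prod; apply: group_prod => i _.
by apply: x_U; rewrite ltn_ord.
Qed.

Lemma card_U : #|Ud4 x| = (#|F| ^ 12)%N.
Proof.
case: Rel => _ _ inj _.
by rewrite U_img card_imset // cardsT card_ffun card_ord.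
Qed.

Lemma norm_x s i t : chain_ok s -> (0 < i <= 12)%N ->
  all (fun j => [|| (i == j), (i < j)%N && commOK i j s | (j < i)%N && commOK j i s]) s ->
  x i t \in 'N(Xprod x s).
Proof.
move=> ch hi hall; have [gB _] := chain ch.
have rs := chain_range ch; have us := chain_uniq ch; pose BG := Group gB.
rewrite inE; apply/subsetP => y /imsetP[b bB ->].
have [f ->] := mem_Xprod us bB.
rewrite conjg_prod big_seq; apply: (@group_prod _ BG) => n ns.
have /andP[n0 n12] := allP rs n ns.
case/or3P: (allP hall n ns) => [/eqP ein|/andP[lt cok]|/andP[lt cok]].
- subst n; by rewrite conjgE xadd // xinv // xadd // addrC addrK; apply: Xroot_sub.
- rewrite conj_lt //; first (by apply: groupM; [apply: Xroot_sub | rewrite groupV; apply: cm_mem]).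
  by case/andP: hi.
- rewrite conj_gt //; last by case/andP: hi.
  by apply: groupM; [apply: Xroot_sub | apply: cm_mem].
Qed.


Definition hookl := [:: 3;5;6;7;8;9;10;11;12]%N.
Definition Vl := [:: 1;2;4;8;9;10;11;12]%N.

Lemma chain_hook : chain_ok hookl. Proof. by []. Qed.
Lemma chain_V : chain_ok Vl. Proof. by []. Qed.

Lemma gH : group_set (Hhook x). Proof. by have [] := chain chain_hook. Qed.
Lemma cardH : #|Hhook x| = (#|F| ^ 9)%N. Proof. by have [] := chain chain_hook. Qed.
Lemma gV : group_set (Vd4 x). Proof. by have [] := chain chain_V. Qed.
Lemma cardV : #|Vd4 x| = (#|F| ^ 8)%N. Proof. by have [] := chain chain_V. Qed.
Lemma HsubU : Hhook x \subset Ud4 x. Proof. exact: Xprod_U. Qed.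
Lemma VsubU : Vd4 x \subset Ud4 x. Proof. exact: Xprod_U. Qed.

Lemma normH : Ud4 x \subset 'N(Hhook x).
Proof.
rewrite gen_subG; apply/bigcupsP => i _; apply/subsetP => y /imsetP[t _ ->].
apply: norm_x; first exact: chain_hook; first by rewrite ltn_ord.
have : all (fun i => all (fun j => [|| (i == j), (i < j)%N && commOK i j hookl
   | (j < i)%N && commOK j i hookl]) hookl) (iota 1 12) by [].
by move/allP; apply; rewrite mem_iota /= add1n ltnS ltn_ord.
Qed.

Lemma commute_x12 i t d : (0 < i <= 12)%N -> commute (x i t) (x 12 d).
Proof.
case/andP=> i0; rewrite leq_eqVlt => /orP[/eqP ->|lt].
  by rewrite /commute !xadd // addrC.
apply/commgP; rewrite commx //.
have : all (fun i => d4comm i 12 == None) (iota 1 11) by [].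
by move/allP/(_ i); rewrite mem_iota i0 /= add1n => /(_ lt)/eqP; rewrite /cm => ->.
Qed.

Lemma x12_cent d : x 12 d \in 'C(Ud4 x).
Proof.
apply/centP => g gU; apply: commute_sym.
suff: Ud4 x \subset 'C[x 12 d] by move/subsetP/(_ g gU)/cent1P.
rewrite gen_subG; apply/bigcupsP => i _; apply/subsetP => y /imsetP[t _ ->].
by apply/cent1P; apply: commute_x12; rewrite ltn_ord.
Qed.

Lemma X12_sub_V : Xroot x 12 \subset Vd4 x.
Proof. by apply/subsetP => y /imsetP[t _ ->]; apply: Xroot_sub. Qed.
Lemma X12_sub_H : Xroot x 12 \subset Hhook x.
Proof. by apply/subsetP => y /imsetP[t _ ->]; apply: Xroot_sub. Qed.


Definition g3 (v : 'rV[F]_3) : gT :=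
  x 1 (v ord0 ord0) * x 2 (v ord0 (inord 1)) * x 4 (v ord0 (inord 2)).

Lemma comm_x i j t u : (0 < i)%N -> (i < j)%N -> (j <= 12)%N -> d4comm i j = None ->
  commute (x i t) (x j u).
Proof. by move=> h1 h2 h3 h4; apply/commgP; rewrite commx // /cm h4. Qed.

Lemma g3M : {in [set: 'rV[F]_3] &, {morph g3 : v w / (v * w)%g >-> v * w}}.
Proof.
move=> v w _ _; rewrite /g3.
have c12 : forall t u, commute (x 1 t) (x 2 u) by move=> *; apply: comm_x.
have c14 : forall t u, commute (x 1 t) (x 4 u) by move=> *; apply: comm_x.
have c24 : forall t u, commute (x 2 t) (x 4 u) by move=> *; apply: comm_x.
rewrite !mxE -!xadd //.
rewrite -!mulgA; congr (_ * _).
set A := x 1 _; set B := x 2 _; set B' := x 2 _; set C := x 4 _; set C' := x 4 _.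
have e1 : C * (A * (B' * C')) = A * (C * (B' * C')) by rewrite mulgA -c14 -mulgA.
have e2 : B * (A * (C * (B' * C'))) = A * (B * (C * (B' * C'))) by rewrite mulgA -c12 -mulgA.
rewrite e1 e2; congr (_ * (_ * _)).
by rewrite mulgA c24 -mulgA.
Qed.

Lemma g3U v : g3 v \in Ud4 x.
Proof. by rewrite /g3 !groupM ?x_U. Qed.

Lemma g3H v : g3 v \in Hhook x -> v = 0%R.
Proof.
move=> /(mem_Xprod (chain_uniq chain_hook))[f ef].
have E : g3 v = \prod_(n <- [:: 1; 2; 4]%N) x n ((fun n => if n == 1%N then v ord0 ord0
   else if n == 2%N then v ord0 (inord 1) else v ord0 (inord 2)) n).
  by rewrite !big_cons big_nil mulg1 /g3 /= mulgA.
move: ef; rewrite E !prod_d4 //; case: Rel => _ _ inj _ /inj e.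
have ev := fun k => congr1 (fun d : {ffun 'I_12 -> F} => d k) e.
apply/matrixP => i j; rewrite (ord1 i) !mxE.
case: j => [[|[|[|j]]] hj] //.
- by have := ev ord0; rewrite !ffunE /= => <-; congr (v _ _); apply: val_inj.
- by have := ev (inord 1); rewrite !ffunE /= inordK //= => <-; congr (v _ _); apply: val_inj; rewrite /= ?inordK.
- by have := ev (inord 3); rewrite !ffunE /= inordK //= => <-; congr (v _ _); apply: val_inj; rewrite /= ?inordK.
Qed.

Lemma isoUH : (Ud4 x / Hhook x)%g \isog [set: 'rV[F]_3].
Proof.
rewrite isog_sym; apply/isogP.
pose fq v := coset (Hhook x) (g3 v).
have fqM : {in [set: 'rV[F]_3] &, {morph fq : v w / v * w}}.
  move=> v w _ _; rewrite /fq g3M ?inE // morphM //; apply: (subsetP normH); apply: g3U.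
pose f := Morphism fqM.
have injf : 'injm f.
  apply/subsetP => v vk; have fv := mker vk.
  rewrite inE; apply/eqP; apply: g3H; apply: (@coset_idr _ (Group gH)) => //.
  by apply: (subsetP normH); apply: g3U.
exists f => //.
apply/eqP; rewrite eqEcard; apply/andP; split.
  rewrite morphimEdom; apply/subsetP => y /imsetP[v _ ->]; apply: (@mem_quotient _ (Group gH)); apply: g3U.
rewrite card_injm // cardsT card_mx (@card_quotient _ (Group gH)) ?normH // -divgS ?HsubU // card_U cardH.
have q0 : (0 < #|F| ^ 9)%N by rewrite expn_gt0 (cardD1 0%R).
by rewrite (_ : 12 = 3 + 9)%N // expnD mulnK.
Qed.

Definition corr j n (a t : F) : gT :=
  if (j < n)%N then (cm j n t a)^-1 else if (n < j)%N then cm n j a t else 1.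

Lemma conj_corr j n a t : (0 < j <= 12)%N -> (0 < n <= 12)%N ->
  x n a ^ x j t = x n a * corr j n a t.
Proof.
case/andP=> j0 j12; case/andP=> n0 n12; rewrite /corr.
case: ltngtP => [lt|lt|e].
- by rewrite conj_lt.
- by rewrite conj_gt.
- have hn : (0 < n <= 12)%N by rewrite n0 n12.
  by rewrite e conjgE (xadd _ _ hn) (xinv _ hn) (xadd _ _ hn) addrC addrK mulg1.
Qed.

Lemma prod_central (s : seq nat) (y c : nat -> gT) :
  (forall n, n \in s -> c n \in 'C(Ud4 x)) -> (forall n, n \in s -> y n \in Ud4 x) ->
  \prod_(n <- s) (y n * c n) = \prod_(n <- s) y n * \prod_(n <- s) c n.
Proof.
elim: s => [|i s IH] hc hy; first by rewrite !big_nil mulg1.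
rewrite !big_cons IH; last 2 first.
- by move=> n ns; apply: hc; rewrite inE ns orbT.
- by move=> n ns; apply: hy; rewrite inE ns orbT.
have cP : commute (c i) (\prod_(n <- s) y n).
  have /centP hC := hc i (mem_head _ _); apply: hC.
  by rewrite big_seq; apply: group_prod => n ns; apply: hy; rewrite inE ns orbT.
by rewrite -!mulgA; congr (_ * _); rewrite !mulgA cP.
Qed.

Definition c12 i j := match d4comm i j with Some (k, _) => k == 12%N | None => true end.

Lemma cm_cent i j a t : c12 i j -> cm i j a t \in 'C(Ud4 x).
Proof.
rewrite /c12 /cm; case: d4comm => [[k neg] /eqP ->|_]; first exact: x12_cent.
exact: group1.
Qed.

Lemma conj_prod_hook j t (f : nat -> F) : j \in hookl ->
  (\prod_(n <- hookl) x n (f n)) ^ x j t =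
  (\prod_(n <- hookl) x n (f n)) * \prod_(n <- hookl) corr j n (f n) t.
Proof.
move=> jh; have rs := chain_range chain_hook.
have jr := allP rs j jh.
rewrite conjg_prod (eq_big_seq (fun n => x n (f n) * corr j n (f n) t)); last first.
  by move=> n nh; rewrite conj_corr //; apply: (allP rs).
apply: prod_central => n nh.
  have : all (fun j => all (fun n => c12 j n && c12 n j) hookl) hookl by [].
  move/allP/(_ j jh)/allP/(_ n nh)/andP => [h1 h2].
  rewrite /corr; case: ifP => _; first by rewrite groupV cm_cent.
  by case: ifP => _; [rewrite cm_cent | rewrite group1].
by apply: x_U; apply: (allP rs).
Qed.

Lemma hook_conj h e : h \in Hhook x -> h \notin Xroot x 12 ->
  exists2 g, g \in Hhook x & h ^ g = h * x 12 e.
Proof.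
move=> /(mem_Xprod (chain_uniq chain_hook))[f ->] hX.
have rs := chain_range chain_hook.
have inH : forall j t, j \in hookl -> x j t \in Hhook x.
  by move=> j t jh; apply: Xroot_sub.
have K : forall j t, j \in hookl -> \prod_(n <- hookl) corr j n (f n) t = x 12 e ->
   exists2 g, g \in Hhook x & (\prod_(n <- hookl) x n (f n)) ^ g = (\prod_(n <- hookl) x n (f n)) * x 12 e.
  by move=> j t jh ec; exists (x j t); [apply: inH | rewrite conj_prod_hook // ec].
have S : forall k j, (0 < k <= 12)%N -> (0 < j <= 12)%N -> x k 0%R * x j 0%R = 1.
  by move=> k j hk hj; rewrite !x0 // mulg1.
case: (eqVneq (f 3%N) 0%R) => [f3|f3].
  2: { apply: (K 11%N (- (e / f 3%N))%R) => //.
       rewrite /hookl !big_cons big_nil /corr /cm /= !invg1 !mul1g !mulg1.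
       by congr (x 12 _); rewrite mulrN opprK mulrC divfK. }
case: (eqVneq (f 5%N) 0%R) => [f5|f5].
  2: { apply: (K 10%N (- (e / f 5%N))%R) => //.
       rewrite /hookl !big_cons big_nil /corr /cm /= !invg1 !mul1g !mulg1.
       by congr (x 12 _); rewrite mulrN opprK mulrC divfK. }
case: (eqVneq (f 6%N) 0%R) => [f6|f6].
  2: { apply: (K 9%N (- (e / f 6%N))%R) => //.
       rewrite /hookl !big_cons big_nil /corr /cm /= !invg1 !mul1g !mulg1.
       by congr (x 12 _); rewrite mulrN opprK mulrC divfK. }
case: (eqVneq (f 7%N) 0%R) => [f7|f7].
  2: { apply: (K 8%N (e / f 7%N)%R) => //.
       rewrite /hookl !big_cons big_nil /corr /cm /= !invg1 !mul1g !mulg1.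
       by congr (x 12 _); rewrite mulrC divfK. }
case: (eqVneq (f 8%N) 0%R) => [f8|f8].
  2: { apply: (K 7%N (- (e / f 8%N))%R) => //.
       rewrite /hookl !big_cons big_nil /corr /cm /= !invg1 !mul1g !mulg1 xinv //.
       by congr (x 12 _); rewrite mulNr opprK divfK. }
case: (eqVneq (f 9%N) 0%R) => [f9|f9].
  2: { apply: (K 6%N (e / f 9%N)%R) => //.
       rewrite /hookl !big_cons big_nil /corr /cm /= !invg1 !mul1g !mulg1 xinv //.
       by congr (x 12 _); rewrite opprK divfK. }
case: (eqVneq (f 10%N) 0%R) => [f10|f10].
  2: { apply: (K 5%N (e / f 10%N)%R) => //.
       rewrite /hookl !big_cons big_nil /corr /cm /= !invg1 !mul1g !mulg1 xinv //.
       by congr (x 12 _); rewrite opprK divfK. }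
case: (eqVneq (f 11%N) 0%R) => [f11|f11].
  2: { apply: (K 3%N (e / f 11%N)%R) => //.
       rewrite /hookl !big_cons big_nil /corr /cm /= !invg1 !mul1g !mulg1 xinv //.
       by congr (x 12 _); rewrite opprK divfK. }
move: hX; rewrite /hookl !big_cons big_nil f3 f5 f6 f7 f8 f9 f10 f11 !x0 // !mul1g mulg1.
by rewrite mem_Xroot.
Qed.

Lemma gX12 : group_set (Xroot x 12). Proof. exact: Xroot_group. Qed.

Lemma X12_card : #|Xroot x 12| = #|F|.
Proof.
have [_ c] := chain (s := [:: 12]%N) erefl.
by move: c; rewrite Xprod_cons Xprod_nil mulg1 expn1.
Qed.

Lemma cm_X12 i j a t : c12 i j -> cm i j a t \in Xroot x 12.
Proof.
rewrite /c12 /cm; case: d4comm => [[k neg] /eqP ->|_]; first exact: mem_Xroot.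
exact: (@group1 _ (Group gX12)).
Qed.

Lemma corr_X12 j n a t : j \in hookl -> n \in hookl -> corr j n a t \in Xroot x 12.
Proof.
move=> jh nh.
have : all (fun j => all (fun n => c12 j n && c12 n j) hookl) hookl by [].
move/allP/(_ j jh)/allP/(_ n nh)/andP => [h1 h2].
rewrite /corr; case: ifP => _; first by rewrite (@groupV _ (Group gX12)) cm_X12.
by case: ifP => _; [rewrite cm_X12 | rewrite (@group1 _ (Group gX12))].
Qed.

Lemma central_conj c g : c \in 'C(Ud4 x) -> g \in Ud4 x -> c ^ g = c.
Proof. by move=> /centP cc gU; rewrite conjgE (cc g gU) mulKg. Qed.

Lemma X12_cent y : y \in Xroot x 12 -> y \in 'C(Ud4 x).
Proof. by case/imsetP=> t _ ->; apply: x12_cent. Qed.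

Lemma comm_H h1 h2 : h1 \in Hhook x -> h2 \in Hhook x -> [~ h1, h2] \in Xroot x 12.
Proof.
move=> /(mem_Xprod (chain_uniq chain_hook))[f ->] /(mem_Xprod (chain_uniq chain_hook))[g ->].
have rs := chain_range chain_hook.
set P := \prod_(n <- hookl) x n (f n).
have PU : P \in Ud4 x by apply: (subsetP HsubU); apply: Xprod_mem.
rewrite /commg; have : {subset hookl <= hookl} by [].
elim: {-2}hookl => [|j s IH] sub.
  by rewrite big_nil conjg1 mulVg (@group1 _ (Group gX12)).
have jh : j \in hookl by apply: sub; rewrite mem_head.
have QU : \prod_(n <- s) x n (g n) \in Ud4 x.
  rewrite big_seq; apply: group_prod => n ns; apply: x_U; apply: (allP rs); apply: sub.
  by rewrite inE ns orbT.
rewrite big_cons conjgM conj_prod_hook // -/P conjMg mulgA.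
have CX : \prod_(n <- hookl) corr j n (f n) (g j) \in Xroot x 12.
  by rewrite big_seq; apply: (@group_prod _ (Group gX12)) => n nh; apply: corr_X12.
rewrite (@central_conj (\prod_(n <- hookl) corr j n (f n) (g j)) (\prod_(n <- s) x n (g n))) ?X12_cent //.
apply: (@groupM _ (Group gX12)) => //.
by apply: IH => n ns; apply: sub; rewrite inE ns orbT.
Qed.

End Infra.
Unset Implicit Arguments. Set Strict Implicit. Set Printing Implicit Defensive.

Local Open Scope ring_scope.

Theorem mainTheorem6 (F : finFieldType) (gT : finGroupType) (x : nat -> F -> gT)
    (phi : F -> algC)
    (lam : F -> 'CF(<<Vd4 x>>%G)) :
  D4_relations x ->
  nontriv_add_char phi ->
  (forall s : F, s != 0 ->
     lam s \is a linear_char /\ (forall d : F, lam s (x 12%N d) = phi (s * d))) ->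
  let U := Ud4 x in
  let H := Hhook x in
  let mu := fun s : F => 'Res[<<H>>%G] ('Ind[<<U>>%G] (lam s)) in
  [/\ group_set H /\ (H <| U)%g,
      (U / H)%g \isog [set: 'rV[F]_3],
      (forall s : F, s != 0 -> mu s \in irr <<H>>%G /\ mu s 1%g = (#|F| ^ 4)%N%:R),
      {in predC1 0 &, injective mu} &
      ((forall chi, chi \in irr <<H>>%G ->
          ~~ (chi \is a linear_char) <-> exists2 s : F, s != 0 & chi = mu s) /\
       (forall chi, chi \in irr <<H>>%G -> ~~ (chi \is a linear_char) ->
          exists2 psi, psi \in irr <<U>>%G & 'Res[<<H>>%G] psi = chi))].
Proof.
move=> Rel [phiM [a0 pa0]] lamH U H mu.
have eH : <<H>>%g = H := genGid (Group (gH Rel)).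
have eU : <<U>>%g = U := genGid _.
have eV : <<Vd4 x>>%g = Vd4 x := genGid (Group (gV Rel)).
have sWU : <<Vd4 x>>%G \subset <<U>>%G by rewrite /= eV eU VsubU.
have sHU : <<H>>%G \subset <<U>>%G by rewrite /= eH eU HsubU.
set q := #|F|.
have q0 : (0 < q)%N by rewrite /q (cardD1 0%R).
have q1 : (1 < q)%N.
  by rewrite /q (cardD1 0%R) (cardD1 1%R) !inE oner_neq0.
have cUW : #|<<U>>%G : <<Vd4 x>>%G|%g = (q ^ 4)%N.
  rewrite -divgS // /= eV eU card_U // cardV // (_ : 12 = 4 + 8)%N // expnD mulnK //.
  by rewrite expn_gt0 q0.
have z12W : forall d, x 12%N d \in <<Vd4 x>>%G.
  by move=> d; rewrite /= eV; apply: (subsetP (X12_sub_V Rel)); apply: mem_Xroot.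
have indM : forall s, s != 0 -> forall g d, g \in <<U>>%G ->
    'Ind[<<U>>%G] (lam s) (g * x 12%N d)%g = lam s (x 12%N d) * 'Ind[<<U>>%G] (lam s) g.
  move=> s s0 g d gU; have [lin lv] := lamH s s0.
  rewrite !cfIndE // mulrCA; congr (_ * _); rewrite mulr_sumr; apply: eq_bigr => y yU.
  rewrite conjMg (@central_conj _ _ x (x 12%N d) y) ?(x12_cent Rel) //; last by move: yU; rewrite /= eU.
  case: (boolP (g ^ y \in <<Vd4 x>>%G)%g) => gyW.
    by rewrite lin_charM // mulrC.
  by rewrite (cfun0 _ gyW) mulr0 cfun0 // groupMr.
have vanish : forall s, s != 0 -> forall h, h \in H -> h \notin Xroot x 12 ->
    'Ind[<<U>>%G] (lam s) h = 0.
  move=> s s0 h hH hX; have [lin lv] := lamH s s0.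
  have [g gH ehg] := hook_conj Rel (a0 / s) hH hX.
  have gU : g \in <<U>>%G by rewrite /= eU; apply: (subsetP (HsubU x)).
  have hU : h \in <<U>>%G by rewrite /= eU; apply: (subsetP (HsubU x)).
  have := cfunJ ('Ind[<<U>>%G] (lam s)) h gU.
  rewrite ehg indM // lv [s * _]mulrC divfK // => /eqP.
  rewrite -subr_eq0 -{2}[_ h]mul1r -mulrBl mulf_eq0 subr_eq0 (negbTE pa0) /=.
  by move/eqP.
have muE : forall s h, h \in H -> mu s h = 'Ind[<<U>>%G] (lam s) h.
  by move=> s h hH; rewrite /mu cfResE // /= eH.
have mu1 : forall s, s != 0 -> mu s 1%g = (q ^ 4)%N%:R.
  move=> s s0; have [lin lv] := lamH s s0.
  rewrite muE; last exact: (group1 (Group (gH Rel))).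
  rewrite (cfInd1 _ sWU).
  by rewrite cUW lin_char1 // mulr1.
have muz : forall s, s != 0 -> forall d, mu s (x 12%N d) = phi (s * d) * (q ^ 4)%N%:R.
  move=> s s0 d; have [lin lv] := lamH s s0.
  rewrite muE; last by apply: (subsetP (X12_sub_H Rel)); apply: mem_Xroot.
  rewrite -[x 12%N d]mul1g indM // ?group1 // -lv; congr (_ * _).
  by rewrite (cfInd1 _ sWU) cUW lin_char1 // mulr1.
have muirr : forall s, s != 0 -> mu s \in irr <<H>>%G.
  move=> s s0; have [lin lv] := lamH s s0.
  rewrite irrEchar cfRes_char ?cfInd_char ?lin_charW //=.
  have on : mu s \in 'CF(<<H>>%G, Xroot x 12).
    apply/cfun_onP => h hX; case: (boolP (h \in <<H>>%G)) => hH; last by rewrite cfun0.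
    have hH' : h \in H by rewrite -eH.
    by rewrite muE // vanish.
  rewrite (cfnormE on).
  rewrite (eq_bigr (fun _ => ((q ^ 4)%N%:R) ^+ 2)); last first.
    move=> z /imsetP[d _ ->]; rewrite muz // normrM exprMn normr_nat.
    suff -> : `|phi (s * d)| ^+ 2 = 1 by rewrite mul1r.
    by rewrite -lv normCK -lin_charV_conj // -lin_charM ?groupV // mulgV lin_char1.
  rewrite sumr_const X12_card // (_ : #|<<H>>%G| = q ^ 9)%N; last by rewrite /= eH cardH.
  rewrite -/q -natrX -[_ *+ q]mulr_natr -natrM.
  have -> : ((q ^ 4) ^ 2 * q = q ^ 9)%N by rewrite -expnM -expnSr.
  by rewrite mulVf // pnatr_eq0 -lt0n expn_gt0 q0.
have muinj : {in predC1 0 &, injective mu}.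
  move=> s s' hs hs' e; rewrite !inE in hs hs'.
  apply/eqP; apply: contraT => ne.
  have E : forall d, phi (s * d) = phi (s' * d).
    move=> d; have := congr1 (fun f : 'CF(<<H>>%G) => f (x 12%N d)) e; rewrite /= !muz //.
    by move/mulIf; apply; rewrite pnatr_eq0 -lt0n expn_gt0 q0.
  have h : (s - s') != 0 by rewrite subr_eq0.
  pose d := a0 / (s - s').
  have : phi (s * d) = phi (s' * d) * phi a0.
    rewrite -phiM; congr phi.
    rewrite -[a0](divfK h) -/d mulrBr [d * s]mulrC [d * s']mulrC addrC subrK //.
  rewrite E => /eqP; rewrite -subr_eq0 -{1}[phi (s' * d)]mulr1 -mulrBr mulf_eq0.
  rewrite subr_eq0 [1 == _]eq_sym (negbTE pa0) orbF => /eqP p0.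
  have [lin' lv'] := lamH s' hs'.
  by have := lin_char_neq0 lin' (z12W d); rewrite lv' p0 eqxx.
have munl : forall s, s != 0 -> ~~ (mu s \is a linear_char).
  move=> s s0; apply/negP => /lin_char1; rewrite mu1 // => /eqP.
  by rewrite pnatr_eq1 -{2}(exp1n 4) eqn_exp2r //; apply/negP; rewrite neq_ltn q1 orbT.
have classify : forall chi, chi \in irr <<H>>%G -> ~~ (chi \is a linear_char) ->
    exists2 s : F, s != 0 & chi = mu s.
  move=> chi chiI nl.
  case: (boolP [exists s : F, (s != 0) && (chi == mu s)]) => [/existsP[s /andP[s0 /eqP e]]|nex].
    by exists s.
  exfalso.
  pose i0 := cfIirr chi; have ei0 : 'chi_i0 = chi := cfIirrE chiI.
  pose M := [set i : Iirr <<H>>%G | [exists s : F, (s != 0) && ('chi_i == mu s)]].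
  pose D i := Num.truncn ('chi[<<H>>%G]_i 1%g).
  have DE : forall i, 'chi[<<H>>%G]_i 1%g = (D i)%:R.
    by move=> i; rewrite /D truncnK // Cnat_irr1.
  have sumD : (\sum_i D i ^ 2 = q ^ 9)%N.
    apply/eqP; rewrite -(eqr_nat algC) natr_sum.
    have := irr_sum_square <<H>>%G; rewrite (_ : #|<<H>>%G| = q ^ 9)%N; last by rewrite /= eH cardH.
    by move=> <-; apply/eqP; apply: eq_bigr => i _; rewrite DE natrX.
  have linE : forall i, ('chi[<<H>>%G]_i \is a linear_char) = (D i == 1%N).
    by move=> i; rewrite qualifE /linear_char_pred irr_char /= DE pnatr_eq1.
  have DM : forall i, i \in M -> D i = (q ^ 4)%N.
    by move=> i; rewrite inE => /existsP[s /andP[s0 /eqP e]]; rewrite /D e mu1 // natrK.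
  have Mnl : forall i, i \in M -> ~~ ('chi[<<H>>%G]_i \is a linear_char).
    by move=> i; rewrite inE => /existsP[s /andP[s0 /eqP ->]]; apply: munl.
  have i0M : i0 \notin M.
    apply/negP; rewrite inE => /existsP[s /andP[s0 /eqP e]].
    move/negP: nex; apply; apply/existsP; exists s; rewrite s0 /=; rewrite -ei0 e eqxx //.
  have cardM : (q.-1 <= #|M|)%N.
    pose gs i := odflt 0 [pick s : F | (s != 0) && ('chi[<<H>>%G]_i == mu s)].
    rewrite /q -(cardsC1 (0 : F)); apply: leq_trans (leq_imset_card gs M); apply: subset_leq_card.
    apply/subsetP => s; rewrite !inE => s0.
    have mI := muirr s s0; pose i := cfIirr (mu s); have ei : 'chi_i = mu s := cfIirrE mI.
    apply/imsetP; exists i.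
      by rewrite inE; apply/existsP; exists s; rewrite s0 ei eqxx.
    rewrite /gs; case: pickP => [s' /andP[s'0 /eqP e]|/(_ s)]; last by rewrite s0 ei eqxx.
    by apply: muinj; rewrite ?inE // -e ei.
  have der : (q ^ 8 <= #|<<H>>%G : (<<H>>%G)^`(1)|%g)%N.
    have sub : ((<<H>>%G)^`(1) \subset Xroot x 12)%g.
      rewrite derg1 /commutator (gen_subG _ (Group (gX12 Rel))).
      apply/subsetP => c /imset2P[a b aH bH ->].
      by apply: (comm_H Rel); [move: aH | move: bH]; rewrite /= eH.
    have cd := subset_leq_card sub; rewrite (X12_card Rel) -/q in cd.
    have L := Lagrange (der_sub 1 <<H>>%G).
    rewrite (_ : #|<<H>>%G| = q ^ 9)%N in L; last by rewrite /= eH cardH.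
    rewrite -(leq_pmul2l q0) -expnS -L leq_mul2r cd orbT //.
  have lin1 : (\sum_(i | 'chi[<<H>>%G]_i \is a linear_char) D i ^ 2 =
      #|<<H>>%G : (<<H>>%G)^`(1)|%g)%N.
    rewrite -card_lin_irr -sum1_card; apply: eq_big => // i.
    by rewrite linE => /eqP ->.
  have nl2 : (1 + #|M| * q ^ 8 <= \sum_(i | ~~ ('chi[<<H>>%G]_i \is a linear_char)) D i ^ 2)%N.
    rewrite (bigD1 i0) /=; last by rewrite ei0.
    apply: leq_add.
      by rewrite expn_gt0; apply/orP; left; rewrite -(ltr0n algC) -DE; apply: irr1_gt0.
    rewrite (bigID (fun i => i \in M)) /=; apply: leq_trans (leq_addr _ _).
    rewrite -sum_nat_const; apply: eq_leq; apply: eq_big => i.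
      case: (boolP (i \in M)) => iM; rewrite ?andbF ?andbT //.
      rewrite Mnl //=; apply/esym/eqP => e; rewrite e in iM; by rewrite iM in i0M.
    by move=> iM; rewrite DM // -expnM.
  have := sumD; rewrite (bigID (fun i => 'chi[<<H>>%G]_i \is a linear_char)) /= lin1 => E.
  have : (q ^ 8 + (1 + q.-1 * q ^ 8) <= q ^ 9)%N.
    rewrite -E; apply: leq_add => //; apply: leq_trans nl2; rewrite leq_add2l leq_mul2r cardM orbT //.
  rewrite addnCA -mulSn prednK // -expnS addnC.
  by rewrite addn1 ltnn.
have [lin0 _] := lamH 1 (oner_neq0 F).
split.
- split; first exact: (gH Rel).
  by rewrite /normal (HsubU x) (normH Rel).
- exact: (isoUH Rel).
- by move=> s s0; split; [exact: muirr | exact: mu1].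
- exact: muinj.
split.
  move=> chi chiI; split; first exact: classify.
  by case=> s s0 ->; apply: munl.
move=> chi chiI nl; have [s s0 ->] := classify chi chiI nl.
have [lin lv] := lamH s s0.
exists ('Ind[<<U>>%G] (lam s)) => //.
by apply: cfRes_irr_irr; [apply: cfInd_char; apply: lin_charW | apply: muirr].
Qed.
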